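(* Let $H$ be a real Hilbert space, $A:H\to2^H$ maximal monotone with $\mathrm{zer}A\ne\emptyset$, $(\gamma_n)$ a sequence in $(0,\infty)$ with $\sum_n\gamma_n^2=\infty$ and rate of divergence $\theta$, $x_0\in H$, $x_{n+1}=J_{\gamma_nA}x_n$, $u_n=(x_n-x_{n+1})/\gamma_n$, and $b>0$ with $b\ge\|x_0-p\|$ for some $p\in\mathrm{zer}A$. Then: (i) for every $k,L\in\mathbb{N}$ there exists $N$ with $L\le N\le\Delta(k,L,b):=\lceil b^2(k+1)^2\rceil+L-1$ and $\|x_N-x_{N+1}\|\le\frac1{k+1}$; (ii) $u_n\to0$ with rate of convergence $\beta(k,\theta,b):=\theta(\lceil b^2(k+1)^2\rceil)$, i.e. $\|u_n\|\le\frac1{k+1}$ for all $k$ and all $n\ge\beta(k,\theta,b)$.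
   Context: $J_{\gamma A}:=(Id+\gamma A)^{-1}$ is the resolvent. A rate of divergence for $\sum\gamma_n^2$ is $\theta:\mathbb{N}\to\mathbb{N}$ with $\sum_{i=0}^{\theta(n)}\gamma_i^2\ge n$ for all $n$. *)

(* Defs.v *)
From HB Require Import structures.
From mathcomp Require Import all_boot all_order all_algebra.
From mathcomp Require Import all_classical all_reals all_analysis.
Set Implicit Arguments. Unset Strict Implicit. Unset Printing Implicit Defensive.
Import Order.TTheory GRing.Theory Num.Theory.
Import numFieldNormedType.Exports.
Local Open Scope ring_scope.
Local Open Scope classical_set_scope.

(* [ip] is an inner product on the normed space V inducing its norm.
   Together with completeness of V (a completeNormedModType) this makes
   V a real Hilbert space. *)
Definition is_inner_product (R : realType) (V : normedModType R)
  (ip : V -> V -> R) : Prop :=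
  [/\ (forall x y, ip x y = ip y x),
      (forall (a : R) (x y z : V), ip (a *: x + y) z = a * ip x z + ip y z)
    & (forall x, `|x| = Num.sqrt (ip x x))].

Definition monotone_op (R : realType) (V : normedModType R)
  (ip : V -> V -> R) (A : V -> set V) : Prop :=
  forall x y u v, A x u -> A y v -> 0 <= ip (x - y) (u - v).

Definition maximal_monotone (R : realType) (V : normedModType R)
  (ip : V -> V -> R) (A : V -> set V) : Prop :=
  monotone_op ip A /\
  forall B : V -> set V, monotone_op ip B ->
    (forall x u, A x u -> B x u) -> forall x u, B x u -> A x u.

Definition zer (R : realType) (V : normedModType R) (A : V -> set V) : set V :=
  [set x | A x 0].

(* resolvent J_{gamma A} = (Id + gamma A)^{-1}, as a set-valued map:
   y \in J x  iff  x \in y + gamma A y *)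
Definition resolvent (R : realType) (V : normedModType R)
  (gamma : R) (A : V -> set V) : V -> set V :=
  fun x y => exists a, A y a /\ x = y + gamma *: a.

Definition rate_of_divergence (R : realType) (gamma : nat -> R)
  (theta : nat -> nat) : Prop :=
  forall n : nat, n%:R <= \sum_(i < (theta n).+1) gamma i ^+ 2.

(* ceiling as a natural number (used for nonnegative arguments) *)
Definition ceil_nat (R : realType) (x : R) : nat := `|Num.ceil x|%N.

(* Main.v *)
Require Import Defs.
From HB Require Import structures.
From mathcomp Require Import all_boot all_order all_algebra.
From mathcomp Require Import all_classical all_reals all_analysis.
From mathcomp Require Import lra zify.
Import Order.TTheory GRing.Theory Num.Theory.
Import numFieldNormedType.Exports.
Local Open Scope ring_scope.
Local Open Scope classical_set_scope.

Lemma ipD {R : realType} {V : normedModType R} {ip : V -> V -> R} :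
  is_inner_product ip -> forall x y z, ip (x + y) z = ip x z + ip y z.
Proof. rewrite /is_inner_product; case=> _ H _ x y z; by have := H 1 x y z; rewrite scale1r mul1r. Qed.

Lemma ipZ {R : realType} {V : normedModType R} {ip : V -> V -> R} :
  is_inner_product ip -> forall (a : R) x z, ip (a *: x) z = a * ip x z.
Proof.
move=> h a x z; have E := ipD h (a *: x) 0 z.
move: h; rewrite /is_inner_product; case=> _ H _; move: E; rewrite H; lra.
Qed.

Lemma ip0 {R : realType} {V : normedModType R} {ip : V -> V -> R} :
  is_inner_product ip -> forall z, ip 0 z = 0.
Proof. by move=> h z; rewrite -(scale0r (0:V)) ipZ // mul0r. Qed.

Lemma ipB {R : realType} {V : normedModType R} {ip : V -> V -> R} :
  is_inner_product ip -> forall x y z, ip (x - y) z = ip x z - ip y z.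
Proof. by move=> h x y z; rewrite ipD // -scaleN1r ipZ // mulN1r. Qed.

Lemma ipC {R : realType} {V : normedModType R} {ip : V -> V -> R} :
  is_inner_product ip -> forall x y, ip x y = ip y x.
Proof. by rewrite /is_inner_product; case. Qed.

Lemma ip_ge0 {R : realType} {V : normedModType R} {ip : V -> V -> R} :
  is_inner_product ip -> forall x, 0 <= ip x x.
Proof.
move=> h x; rewrite leNgt; apply/negP => Hlt.
have := h; rewrite /is_inner_product; case=> _ _ Hn; have := Hn x.
rewrite ltr0_sqrtr // => /eqP; rewrite normr_eq0 => /eqP x0.
by move: Hlt; rewrite x0 ip0 // ltxx.
Qed.

Lemma normsq {R : realType} {V : normedModType R} {ip : V -> V -> R} :
  is_inner_product ip -> forall x, `|x| ^+ 2 = ip x x.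
Proof. by move=> h x; have := h; rewrite /is_inner_product; case=> _ _ Hn; rewrite Hn sqr_sqrtr // ip_ge0. Qed.

Lemma normsqD {R : realType} {V : normedModType R} {ip : V -> V -> R} :
  is_inner_product ip -> forall x y,
  `|x + y| ^+ 2 = `|x| ^+ 2 + 2 * ip x y + `|y| ^+ 2.
Proof.
move=> h x y; rewrite !(normsq h) !(ipD h) (ipC h y (x + y)) (ipC h x (x + y)).
rewrite !(ipD h) (ipC h y x); lra.
Qed.

Theorem lemma8p3 (R : realType) (V : completeNormedModType R)
  (ip : V -> V -> R) (A : V -> set V) (gamma : nat -> R) (theta : nat -> nat)
  (x : nat -> V) (b : R) :
  is_inner_product ip ->
  maximal_monotone ip A ->
  zer A !=set0 ->
  (forall n, 0 < gamma n) ->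
  (fun n => \sum_(i < n) gamma i ^+ 2) @ \oo --> +oo ->
  rate_of_divergence gamma theta ->
  (forall n, resolvent (gamma n) A (x n) (x n.+1)) ->
  0 < b ->
  (exists2 p, zer A p & `|x 0%N - p| <= b) ->
  (forall k L : nat, exists N : nat,
      [/\ (L <= N)%N, (N <= ceil_nat (b ^+ 2 * (k.+1%:R) ^+ 2) + L - 1)%N
        & `|x N - x N.+1| <= (k.+1%:R)^-1])
  /\
  (forall k n : nat, (theta (ceil_nat (b ^+ 2 * (k.+1%:R) ^+ 2)) <= n)%N ->
      `|(gamma n)^-1 *: (x n - x n.+1)| <= (k.+1%:R)^-1).
Proof.
move=> hip [hmon _] _ gpos _ hrate hres bpos [p zp hb].
have /choice [a Ha] : forall n, exists a, A (x n.+1) a /\ x n = x n.+1 + gamma n *: a.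
  by move=> n; have [a [h1 h2]] := hres n; exists a.
have xa n : x n - x n.+1 = gamma n *: a n.
  by case: (Ha n) => _ ->; rewrite addrC addKr.
have ua n : (gamma n)^-1 *: (x n - x n.+1) = a n.
  by rewrite xa scalerA mulVf ?scale1r // gt_eqF.
pose e n := `|x n - p| ^+ 2.
pose d n := `|x n - x n.+1| ^+ 2.
have dE n : d n = gamma n ^+ 2 * `|a n| ^+ 2.
  by rewrite /d xa normrZ gtr0_norm // exprMn.
have fej n : e n.+1 + d n <= e n.
  have -> : e n = `|(x n.+1 - p) + gamma n *: a n| ^+ 2.
    by rewrite -xa (addrC (x n.+1 - p)) addrA subrK.
  rewrite (normsqD hip) /d /e xa (ipC hip) (ipZ hip) (ipC hip).
  have := hmon (x n.+1) p (a n) 0 (Ha n).1 zp; rewrite subr0 => h.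
  have := mulr_ge0 (ltW (gpos n)) h; lra.
have e_le n : e n <= b ^+ 2.
  elim: n => [|n IH].
    by rewrite /e; have := normr_ge0 (x 0%N - p); nra.
  have := fej n; have : 0 <= d n by apply: sqr_ge0. lra.
have sumd L m : \sum_(L <= i < (L + m)%N) d i + e (L + m)%N <= e L.
  elim: m => [|m IH].
    by rewrite addn0 big_geq // add0r.
  rewrite addnS big_nat_recr ?leq_addr //=; have := fej (L + m); lra.
have sumb L m : \sum_(L <= i < (L + m)%N) d i <= b ^+ 2.
  have := sumd L m; have := e_le L; have : 0 <= e (L + m)%N by apply: sqr_ge0.
  lra.
have astep n : `|a n.+1| ^+ 2 <= `|a n| ^+ 2.
  have h := hmon _ _ _ _ (Ha n).1 (Ha n.+1).1.
  rewrite xa (ipZ hip) (ipC hip) (ipB hip) in h.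
  have h1 : 0 <= ip (a n) (a n.+1) - ip (a n.+1) (a n.+1).
    by move: h; rewrite pmulr_rge0.
  have h2 := ip_ge0 hip (a n - a n.+1).
  rewrite (ipB hip) (ipC hip) (ipB hip) (ipC hip (a n.+1) (a n - a n.+1)) (ipB hip) in h2.
  rewrite !(normsq hip) (ipC hip (a n.+1) (a n)) in h2 *; lra.
have amono n i : (i <= n)%N -> `|a n| ^+ 2 <= `|a i| ^+ 2.
  elim: n => [|n IH]; first by rewrite leqn0 => /eqP ->.
  rewrite leq_eqVlt => /orP [/eqP -> //|]; rewrite ltnS => hi.
  exact: le_trans (astep n) (IH hi).
have hm k : b ^+ 2 * (k.+1%:R) ^+ 2 <= (ceil_nat (b ^+ 2 * (k.+1%:R) ^+ 2))%:R :> R.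
  rewrite /ceil_nat natr_absz intr_norm.
  exact: le_trans (ceil_ge _) (ler_norm _).
have cpos k : 0 < (k.+1%:R : R) by rewrite ltr0n.
split.
- move=> k L; set m := ceil_nat _.
  have m0 : (0 < m)%N.
    have : 0 < (m%:R : R).
      apply: lt_le_trans (hm k); apply: mulr_gt0; apply: exprn_gt0 => //.
    by rewrite ltr0n.
  case: (pselect (exists N, (L <= N < L + m)%N /\ `|x N - x N.+1| <= (k.+1%:R)^-1)).
    move=> [N [/andP [h1 h2] h3]]; exists N; split => //; lia.
  move=> Hno; exfalso.
  have hlt i : (L <= i < L + m)%N -> (k.+1%:R : R)^-1 ^+ 2 < d i.
    move=> hi; have : (k.+1%:R : R)^-1 < `|x i - x i.+1|.
      rewrite ltNge; apply/negP => h; apply: Hno; exists i; split => //.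
    move=> h; have h0 : 0 <= (k.+1%:R : R)^-1 by rewrite invr_ge0 ltW.
    rewrite /d; move: h0 h; set y := `|_|; set z := _^-1; nra.
  have hLm : (L < L + m)%N by lia.
  have := ltr_sum_nat hLm hlt.
  rewrite sumr_const_nat addKn.
  have hb2 : b ^+ 2 <= (k.+1%:R : R)^-1 ^+ 2 *+ m.
    rewrite -mulr_natr exprVn mulrC.
    have c2 : (k.+1%:R : R) ^+ 2 != 0 by rewrite gt_eqF // exprn_gt0.
    rewrite -[b ^+ 2](mulfK c2); apply: ler_wpM2r (hm k).
    by rewrite invr_ge0 exprn_ge0 // ltW.
  have := sumb L m; move=> h1 h2; have := le_lt_trans hb2 (lt_le_trans h2 h1); by rewrite ltxx.
- move=> k n Hn; rewrite ua; set m := ceil_nat _ in Hn.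
  have H3 : `|a n| ^+ 2 * \sum_(i < (theta m).+1) gamma i ^+ 2 <= b ^+ 2.
    rewrite mulr_sumr; apply: le_trans (_ : \sum_(i < (theta m).+1) d i <= _).
      apply: ler_sum => i _; rewrite dE mulrC; apply: ler_wpM2l; first exact: sqr_ge0.
      by apply: amono; apply: leq_trans Hn; rewrite -ltnS; exact: ltn_ord.
    by have := sumb 0%N (theta m).+1; rewrite add0n big_mkord.
  have H4 : `|a n| ^+ 2 * (b ^+ 2 * (k.+1%:R) ^+ 2) <= b ^+ 2.
    apply: le_trans H3; apply: ler_wpM2l; first exact: sqr_ge0.
    exact: le_trans (hm k) (hrate m).
  have H5 : (`|a n| * k.+1%:R) ^+ 2 <= 1.
    rewrite -(ler_pM2r (exprn_gt0 2 bpos)) mul1r exprMn.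
    by move: H4; rewrite mulrA mulrAC.
  have H6 : `|a n| * k.+1%:R <= 1.
    have := mulr_ge0 (normr_ge0 (a n)) (ltW (cpos k)); nra.
  by rewrite -(ler_pM2r (cpos k)) mulVf ?gt_eqF.
Qed.
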